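(* Let $(\Omega_X,\mathcal{F}_X)$ and $(\Omega_y,\mathcal{F}_y)$ be measurable spaces and $\pi$ a probability measure on $(\Omega_X\times\Omega_y,\mathcal{F}_X\otimes\mathcal{F}_y)$. Let $s:\Omega_X\times\Omega_y\to\mathbb{R}$ be a measurable score function, $N\ge 1$, $\alpha\in[0,1]$, and let $(X_1,y_1),\dots,(X_N,y_N),(X,y)$ be i.i.d. with law $\pi$. Let $\hat q$ be the $\lceil(1-\alpha)(N+1)\rceil$-th smallest value among $s(X_1,y_1),\dots,s(X_N,y_N)$ (with $\hat q=+\infty$ if $\lceil(1-\alpha)(N+1)\rceil>N$), and define the conformal set $S^{(\alpha)}(x)=\{y'\in\Omega_y: s(x,y')\le \hat q\}$. If $X$ and $s(X,y)$ are independent random variables, then $\alpha$-input-space strong conditional coverage holds: for every $\omega_X\in\mathcal{F}_X$ with $\mathbb{P}(X\in\omega_X)>0$, $$\mathbb{P}\big(y\in S^{(\alpha)}(X)\,\big|\,X\in\omega_X\big)\ge 1-\alpha,$$ where the probability is taken jointly over the calibration data $(X_i,y_i)_{i\le N}$ and the test point $(X,y)$.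
   Context: Split-conformal setting: the predictive model (if any) entering $s$ is fixed and independent of the calibration and test data. The calibration points $(X_i,y_i)_{i=1}^N$ and the test point $(X,y)$ are i.i.d. from $\pi$. Probabilities are marginalized over the calibration data. *)

(* Defs.v *)
From HB Require Import structures.
From mathcomp Require Import all_boot all_order all_algebra.
From mathcomp Require Import all_classical all_reals all_analysis.
Set Implicit Arguments. Unset Strict Implicit. Unset Printing Implicit Defensive.
Import Order.TTheory GRing.Theory Num.Theory.
Local Open Scope classical_set_scope.
Local Open Scope ring_scope.

(* Mutual independence of a finite family of random elements Z : 'I_n -> Omega -> T,
   each measurable: the joint probability of any rectangle is the product of the
   marginal probabilities (taking A i = setT recovers every subfamily). *)
Definition mutually_independent {dO d : measure_display} (R : realType)
  (Omega : measurableType dO) (T : measurableType d) (P : probability Omega R)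
  (n : nat) (Z : 'I_n -> Omega -> T) : Prop :=
  (forall i, measurable_fun setT (Z i)) /\
  forall A : 'I_n -> set T, (forall i, measurable (A i)) ->
    P (\bigcap_(i in setT) (Z i @^-1` A i)) = (\prod_(i < n) P (Z i @^-1` A i))%E.

Definition iid_with_law {dO d : measure_display} (R : realType)
  (Omega : measurableType dO) (T : measurableType d) (P : probability Omega R)
  (pi : probability T R) (n : nat) (Z : 'I_n -> Omega -> T) : Prop :=
  mutually_independent P Z /\
  forall i A, measurable A -> P (Z i @^-1` A) = pi A.

(* The N calibration points followed by the test point, as a family on 'I_N.+1 *)
Definition calib_and_test {Omega T : Type} (N : nat)
  (Zc : 'I_N -> Omega -> T) (Zt : Omega -> T) : 'I_N.+1 -> Omega -> T :=
  fun i => match unlift ord_max i with Some j => Zc j | None => Zt end.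

Definition independent_rv {dO d1 d2 : measure_display} (R : realType)
  (Omega : measurableType dO) (T1 : measurableType d1) (T2 : measurableType d2)
  (P : probability Omega R) (U : Omega -> T1) (V : Omega -> T2) : Prop :=
  forall A B, measurable A -> measurable B ->
    P (U @^-1` A `&` V @^-1` B) = (P (U @^-1` A) * P (V @^-1` B))%E.

(* k-th smallest element of a list (1-indexed); +oo if k exceeds the length;
   -oo if k <= 0 (only happens for alpha = 1, where the result is vacuous). *)
Definition kth_smallest (R : realType) (k : int) (l : seq R) : \bar R :=
  if (k <= 0)%R then -oo%E
  else if ((size l)%:Z < k)%R then +oo%E
  else (nth 0 (sort <=%R l) (`|k|%N.-1))%:E.

Definition conformal_qhat (R : realType) (alpha : R) (scores : seq R) : \bar R :=
  kth_smallest (Num.ceil ((1 - alpha) * (size scores).+1%:R)) scores.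

Definition conformal_set {TX Ty : Type} (R : realType) (s : TX * Ty -> R)
  (qhat : \bar R) (x : TX) : set Ty := [set y' | ((s (x, y'))%:E <= qhat)%E].

Definition condprob {dO : measure_display} (R : realType) (Omega : measurableType dO)
  (P : probability Omega R) (A B : set Omega) : R :=
  fine (P (A `&` B)) / fine (P B).

(* Main.v *)
Require Import Defs.
From HB Require Import structures.
From mathcomp Require Import all_boot all_order all_algebra perm.
From mathcomp Require Import all_classical all_reals all_analysis.
From mathcomp Require Import lra.
Set Implicit Arguments. Unset Strict Implicit. Unset Printing Implicit Defensive.
Import Order.TTheory GRing.Theory Num.Theory.
Local Open Scope classical_set_scope.
Local Open Scope ring_scope.
Section Key.
Context d dO (R : realType) (T : measurableType d) (Omega : measurableType dO) (n : nat).

Definition rect (A : 'I_n -> set T) : set (n.-tuple T) := [set t | forall i, A i (tnth t i)].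
Definition rects : set (set (n.-tuple T)) :=
  [set X | exists2 A : 'I_n -> set T, (forall i, measurable (A i)) & X = rect A].

Lemma rect_measurable A : (forall i, measurable (A i)) -> measurable (rect A).
Proof.
move=> mA.
have -> : rect A = \bigcap_(i in setT) ((tnth (T:=T))^~ i @^-1` A i).
  by apply/seteqP; split => t /= H i; [move=> _; exact: H| exact: H].
apply: fin_bigcap_measurable; first exact: (@finite_finset (ordinal n)).

by move=> i _; rewrite -[X in measurable X]setTI; apply: measurable_tnth.
Qed.

Lemma measurable_rects : measurable = <<s rects >>.
Proof.
apply/seteqP; split.
- move=> X mX; rewrite /measurable /= in mX.
  apply: (smallest_sub (smallest_sigma_algebra _ _) _ mX).
  move=> Y; rewrite -bigcup_seq => -[i _ [B mB <-]].
  apply: sub_sigma_algebra; exists (fun j => if j == i then B else setT).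
    by move=> j; case: ifP.
  by apply/seteqP; split => t /=; [move=> [_ Bt] j; case: eqP => // ->| move/(_ i); rewrite eqxx].
- apply: smallest_sub; first exact: sigma_algebra_measurable.
  by move=> X [A mA ->]; exact: rect_measurable.
Qed.

Lemma rects_setI : setI_closed rects.
Proof.
move=> X Y [A mA ->] [B mB ->]; exists (fun i => A i `&` B i).
  by move=> i; exact: measurableI.
by apply/seteqP; split => t /=; [move=> [H1 H2] i; split|move=> H; split => i; case: (H i)].
Qed.

Definition tup (Y : 'I_n -> Omega -> T) (o : Omega) : n.-tuple T := [tuple Y i o | i < n].

Lemma measurable_tup Y : (forall i, measurable_fun setT (Y i)) -> measurable_fun setT (tup Y).
Proof.
move=> mY; apply/measurable_fun_tnthP => i.
rewrite (_ : _ \o _ = Y i) //; apply/funext => o /=; by rewrite tnth_mktuple.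
Qed.

Lemma key (m1 m2 : {measure set Omega -> \bar R}) (Y1 Y2 : 'I_n -> Omega -> T) :
  (forall i, measurable_fun setT (Y1 i)) -> (forall i, measurable_fun setT (Y2 i)) ->
  (m1 setT < +oo)%E ->
  (forall A : 'I_n -> set T, (forall i, measurable (A i)) ->
     m1 (\bigcap_(i in setT) (Y1 i @^-1` A i)) = m2 (\bigcap_(i in setT) (Y2 i @^-1` A i))) ->
  forall B, measurable B -> m1 (tup Y1 @^-1` B) = m2 (tup Y2 @^-1` B).
Proof.
move=> mY1 mY2 fin H B mB.
have mf1 := measurable_tup mY1; have mf2 := measurable_tup mY2.
have := @measure_unique _ R _ rects (fun _ => setT) measurable_rects rects_setI _ _
  (pushforward m1 (tup Y1)) (pushforward m2 (tup Y2)) _ _ B mB.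
apply.
- move=> _; exists (fun _ => setT) => //.
  by apply/seteqP; split => t.
- by rewrite bigcup_const.
- move=> X [A mA ->]; rewrite /pushforward.
  have E (Y : 'I_n -> Omega -> T) : tup Y @^-1` rect A = \bigcap_(i in setT) (Y i @^-1` A i).
    apply/seteqP; split => o /=.
      by move=> Ho i _; move: (Ho i); rewrite tnth_mktuple.
    by move=> Ho i; rewrite tnth_mktuple; exact: Ho.
  have := H A mA; rewrite -(E Y1) -(E Y2); apply.
- by move=> _; exact: fin.
Qed.
End Key.
Section Comb.
Context (R : realType).
Local Open Scope set_scope.
Definition cnt n (v : 'I_n -> R) (j : 'I_n) : nat := \sum_(i < n) ((v i < v j)%R : nat).

Lemma cnt_perm n (v : 'I_n -> R) (sg : {perm 'I_n}) j : cnt (fun i => v (sg i)) j = cnt v (sg j).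
Proof. by rewrite /cnt [RHS](reindex_inj (@perm_inj _ sg)). Qed.

Lemma sum_bool_card (J : finType) (q : pred J) : (\sum_(i in J) (q i : nat))%N = #|[set i | q i]|.
Proof.
rewrite -sum1_card [RHS]big_mkcond /=; apply: eq_bigr => i _; rewrite inE; by case: (q i).
Qed.

Lemma cnt_ge n kk (v : 'I_n -> R) : (kk <= n)%N -> (kk <= \sum_(j < n) ((cnt v j < kk)%N : nat))%N.
Proof.
move=> kn; rewrite (sum_bool_card (fun j => (cnt v j < kk)%N)).
set J := [set j | _].
case: (set_0Vmem (~: J)) => [J0 | [j0 j0J]].
  by rewrite -(finset.setCK J) J0 finset.setC0 cardsT card_ord.
case: (arg_minP v j0J) => j1 j1J minj1.
have sub : [set i | v i < v j1] \subset J.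
  apply/fintype.subsetP => i; rewrite inE => lt; apply/negPn/negP => iJ.
  have h : i \in ~: J by rewrite inE.
  have := minj1 i h; by rewrite leNgt lt.
apply: leq_trans (subset_leq_card sub).
rewrite -sum_bool_card -/(cnt v j1).
have h1 : j1 \in ~: J by [].
by move: h1; rewrite !inE -leqNgt.
Qed.
Lemma kth_count (L : seq R) (x : R) kk : (0 < kk)%N -> (kk <= size L)%N ->
  (x <= nth 0 (sort <=%R L) kk.-1) = (count (fun y => (y < x)%R) L < kk)%N.
Proof.
case: kk => // m _ kL /=.
set ss := sort _ L.
have sss : sorted <=%R ss by apply: sort_sorted; exact: le_total.
have szs : size ss = size L by rewrite size_sort.
have -> : count (fun y => y < x) L = count (fun y => y < x) ss.
  have pe : perm_eq ss L by rewrite (path.perm_sort <=%R L L) perm_refl.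
  by apply/esym; apply: (seq.permP pe).
have hle := sorted_leq_nth (@le_trans _ R) (@lexx _ R) 0 sss.
have mlt : (m < size ss)%N by rewrite szs.
apply/idP/idP.
- move=> xle.
  rewrite -(cat_take_drop m ss) count_cat.
  rewrite (@eq_in_count _ _ pred0 (drop m ss)); last first.
    move=> y /(nthP 0) [i ilt <-]; rewrite nth_drop /=.
    apply/negbTE; rewrite -leNgt; apply: (le_trans xle); apply: hle.
    + by rewrite inE.
    + by rewrite inE -ltn_subRL; move: ilt; rewrite size_drop.
    + exact: leq_addr.
  rewrite count_pred0 addn0 ltnS; apply: leq_trans (count_size _ _) _.
  by rewrite size_take; case: ifP => // /negbT; rewrite -leqNgt.
- apply: contraTT; rewrite -ltNge => xgt.
  rewrite -leqNgt.
  rewrite -(cat_take_drop m.+1 ss) count_cat.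
  apply: leq_trans (leq_addr _ _).
  rewrite (@eq_in_count _ _ predT (take m.+1 ss)); last first.
    move=> y /(nthP 0) [i ilt <-].
    have im : (i < m.+1)%N.
      move: ilt; rewrite size_take; case: ifP => // /negbT; rewrite -leqNgt => h1 h2; exact: leq_trans h2 h1.
    have iss : (i < size ss)%N by apply: leq_trans im mlt.
    rewrite nth_take //.
    apply: le_lt_trans xgt; apply: hle => //.
  by rewrite count_predT size_take; case: ifP => // /negbT; rewrite -leqNgt.
Qed.
End Comb.
Section Meas.
Context (R : realType).
Lemma measurable_lt_tuple n (i j : 'I_n) : measurable [set t : n.-tuple R | tnth t i < tnth t j].
Proof.
have mf : measurable_fun setT (fun t : n.-tuple R => tnth t i < tnth t j).
  by apply: measurable_realfun.measurable_fun_ltr; exact: measurable_tnth.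
have := mf measurableT [set true] I; rewrite setTI.
by congr measurable; apply/seteqP; split => t /=.
Qed.

Lemma measurable_B n (kk : nat) (j : 'I_n) :
  measurable [set t : n.-tuple R | (cnt (tnth t) j < kk)%N].
Proof.
have -> : [set t : n.-tuple R | (cnt (tnth t) j < kk)%N] =
  \bigcup_(I in [set I : {set 'I_n} | (#|I| < kk)%N])
    \bigcap_(i in setT) (if i \in I then [set t : n.-tuple R | tnth t i < tnth t j]
                         else ~` [set t : n.-tuple R | tnth t i < tnth t j]).
  apply/seteqP; split => t /=.
  - move=> ht; exists [set i | tnth t i < tnth t j]%SET.
      by rewrite /= -sum_bool_card.
    move=> i _; rewrite inE; case: ifP => //= ->; done.
  - move=> [S0 /= hI hc].
    suff E : S0 = [set i | tnth t i < tnth t j]%SET.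
      by move: hI; rewrite E -sum_bool_card.
    apply/setP => i; rewrite inE; have := hc i I; case: ifP => //=.
    by move=> _ /negP /negbTE.
apply: fin_bigcup_measurable; first exact: finite_finset.
move=> I _; apply: fin_bigcap_measurable; first exact: finite_finset.
move=> i _; case: ifP => _; first exact: measurable_lt_tuple.
by apply: measurableC; exact: measurable_lt_tuple.
Qed.
End Meas.
Lemma count_sum_ord m (q : pred 'I_m) : count q (enum 'I_m) = (\sum_(i < m) (q i : nat))%N.
Proof.
have H (r : seq 'I_m) : count q r = (\sum_(i <- r) (q i : nat))%N.
  by elim: r => [|a r IH]; rewrite ?big_nil ?big_cons //= IH.
by rewrite H enumT.
Qed.

Lemma cnt_tup dO (R : realType) (Omega : measurableType dO) n (Y : 'I_n -> Omega -> R) o j :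
  cnt (tnth (tup Y o)) j = cnt (fun i => Y i o) j.
Proof. by rewrite /cnt; apply: eq_bigr => i _; rewrite !tnth_mktuple. Qed.

Theorem proposition1 (R : realType) (dX dy dO : measure_display)
  (TX : measurableType dX) (Ty : measurableType dy)
  (pi : probability (TX * Ty)%type R)
  (s : TX * Ty -> R) (hs : measurable_fun setT s)
  (N : nat) (hN : (0 < N)%N) (alpha : R) (ha0 : 0 <= alpha) (ha1 : alpha <= 1)
  (Omega : measurableType dO) (P : probability Omega R)
  (Zc : 'I_N -> Omega -> (TX * Ty)%type) (Zt : Omega -> (TX * Ty)%type)
  (hiid : iid_with_law P pi (calib_and_test Zc Zt))
  (hind : independent_rv P (fun o => (Zt o).1) (fun o => s (Zt o))) :
  let qhat := fun o => conformal_qhat alpha [seq s (Zc i o) | i <- enum 'I_N] in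
  forall omegaX : set TX, measurable omegaX ->
    (0 < P ((fun o => (Zt o).1) @^-1` omegaX))%E ->
    1 - alpha <=
      condprob P [set o | conformal_set s (qhat o) (Zt o).1 (Zt o).2]
                 ((fun o => (Zt o).1) @^-1` omegaX).
Proof.
move=> qhat omegaX mom PD.
case: hiid => [[mZ hprod] hlaw].
set Z := calib_and_test Zc Zt in mZ hprod hlaw.
have ZmaxE : Z ord_max = Zt by rewrite /Z /calib_and_test unlift_none.
have ZwE i : Z (widen_ord (leqnSn N) i) = Zc i.
  rewrite /Z /calib_and_test; case: unliftP => [j /(congr1 val) /= hj|/(congr1 val) /= hj].
    congr Zc; apply: val_inj => /=; move: hj; rewrite /bump leqNgt ltn_ord add0n => ->.
    by [].
  by move: (ltn_ord i); rewrite hj ltnn.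
have mXt : measurable_fun setT (fun o => (Zt o).1).
  by apply: measurableT_comp => //; rewrite -ZmaxE; exact: mZ.
set D := (fun o => (Zt o).1) @^-1` omegaX.
have mD : measurable D by rewrite -[D]setTI; exact: mXt.
have PDfin : P D \is a fin_num by exact: fin_num_measure.
set c := fine (P D).
have PDE : P D = c%:E by rewrite fineK.
have c0 : 0 < c by rewrite -lte_fin -PDE.
set S := fun i o => s (Z i o).
have mS i : measurable_fun setT (S i) by exact: measurableT_comp hs (mZ i).
set mu := fun A => pi (s @^-1` A).
have hpre A : measurable A -> measurable (s @^-1` A) by move=> mA; rewrite -[s @^-1` A]setTI; exact: hs.
have F1 A : (forall i, measurable (A i)) ->
    P (\bigcap_(i in setT) (S i @^-1` A i)) = (\prod_(i < N.+1) mu (A i))%E.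
  move=> mA; have := hprod (fun i => s @^-1` A i) (fun i => hpre _ (mA i)).
  move=> ->; apply: eq_bigr => i _; rewrite /mu; exact: (hlaw i _ (hpre _ (mA i))).
have F2 (sg : {perm 'I_N.+1}) B : measurable B ->
    P (tup S @^-1` B) = P (tup (fun i => S (sg i)) @^-1` B).
  apply: (@key _ _ _ _ _ _ P P S (fun i => S (sg i)) (fun i => mS i) (fun i => mS (sg i))).
    by apply: (le_lt_trans (probability_le1 P measurableT)); rewrite ltry.

  move=> A mA.
  have -> : \bigcap_(i in setT) ((fun i => S (sg i)) i @^-1` A i) =
            \bigcap_(i in setT) (S i @^-1` A (sg^-1 i)%g).
    apply/seteqP; split => o /= H i _.
      by have := H (sg^-1 i)%g I; rewrite permKV.
    by have := H (sg i) I; rewrite permK.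
  transitivity (\prod_(i < N.+1) mu (A i))%E; first exact: F1.
  rewrite [LHS](reindex_inj (@perm_inj _ sg^-1)%g).
  by apply/esym; apply: F1 => i; exact: mA.
have cnn : 0 <= c by exact: ltW.
have F3 B : measurable B ->
    P (tup S @^-1` B `&` D) = (c%:E * P (tup S @^-1` B))%E.
  move=> mB.
  suff H : forall A, (forall i, measurable (A i)) ->
      P ((\bigcap_(i in setT) (S i @^-1` A i)) `&` D) =
      (c%:E * P (\bigcap_(i in setT) (S i @^-1` A i)))%E.
    have fin : (mrestr P mD setT < +oo)%E by rewrite /mrestr setTI PDE ltry.
    exact: (@key _ _ R _ _ N.+1 (mrestr P mD) (mscale (NngNum cnn) P) S S mS mS fin H B mB).
  move=> A mA.
  pose A' := fun i => if i == ord_max then s @^-1` A i `&` fst @^-1` omegaX else s @^-1` A i.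
  have mfst : measurable (fst @^-1` omegaX : set (TX * Ty)).
    by rewrite -[X in measurable X]setTI; apply: (measurable_fst measurableT).

  have mA' i : measurable (A' i).
    by rewrite /A'; case: ifP => _; [apply: measurableI => //; exact: hpre | exact: hpre].
  have E1 : \bigcap_(i in setT) (Z i @^-1` A' i) = (\bigcap_(i in setT) (S i @^-1` A i)) `&` D.
    apply/seteqP; split => o /=.
    - move=> H; split.
        move=> i _; have := H i I; rewrite /A'; case: eqP => [-> []|_] //.
      by have := H ord_max I; rewrite /A' eqxx ZmaxE => -[].
    - move=> [H Dx] i _; rewrite /A'; case: eqP => [->|_]; last exact: H.
      by split; [exact: H | rewrite ZmaxE].
  rewrite -E1 hprod //.
  rewrite (bigD1 ord_max) //=.
  have -> : P (Z ord_max @^-1` A' ord_max) = (c%:E * mu (A ord_max))%E.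
    rewrite /A' eqxx ZmaxE -PDE /mu -(hlaw ord_max _ (hpre _ (mA ord_max))) ZmaxE.
    rewrite -hind //.
    by congr (P _); apply/seteqP; split => o /= [].
  rewrite (eq_bigr (fun i => mu (A i))); last first.
    move=> i /negbTE ine; rewrite /A' ine /mu; exact: (hlaw i _ (hpre _ (mA i))).
  transitivity (c%:E * \prod_(i < N.+1) mu (A i))%E; last by congr (_ * _)%E; apply/esym; exact: F1.
  by rewrite [in RHS](bigD1 ord_max) //= muleA.
set k := Num.ceil ((1 - alpha) * (N.+1)%:R).
have qE o : qhat o = kth_smallest k [seq s (Zc i o) | i <- enum 'I_N].
  by rewrite /qhat /conformal_qhat size_map size_enum_ord.
have CE : [set o | conformal_set s (qhat o) (Zt o).1 (Zt o).2] =
          [set o | ((s (Zt o))%:E <= qhat o)%E].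
  by apply/seteqP; split => o /=; rewrite /conformal_set /= -surjective_pairing.
rewrite CE /condprob -/D -/c.
have kx : (1 - alpha) * (N.+1)%:R <= k%:~R by exact: ceil_ge.
have hn : 0 < (N.+1)%:R :> R by rewrite ltr0Sn.
case: (lerP k 0) => [k0 | k0].
  have : (1 - alpha) * (N.+1)%:R <= 0 by rewrite -ceil_le0.
  move=> h; have h2 : 1 - alpha <= 0 by nra.
  apply: (le_trans h2); apply: divr_ge0 => //; apply: fine_ge0; exact: measure_ge0.
case: (ltrP (N%:Z) k) => [kN | kN].
  have -> : [set o | ((s (Zt o))%:E <= qhat o)%E] = setT.
    apply/seteqP; split => o //= _.
    rewrite qE /kth_smallest ifF; last by apply/negbTE; rewrite -ltNge.
    by rewrite size_map size_enum_ord ifT ?leey.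
  rewrite setTI -/c divff ?gt_eqF //; lra.
set kk := `|k|%N.
have kkE : k = kk%:Z by rewrite /kk gez0_abs // ltW.
have kk0 : (0 < kk)%N by rewrite -(ltz_nat 0) -kkE.
have kkN : (kk <= N)%N by rewrite -(lez_nat) -kkE.
set Bj := fun j : 'I_N.+1 => [set t : (N.+1).-tuple R | (cnt (tnth t) j < kk)%N].
have mBj j : measurable (Bj j) by exact: measurable_B.
have CBo o : ((s (Zt o))%:E <= qhat o)%E = (cnt (tnth (tup S o)) ord_max < kk)%N.
  rewrite qE /kth_smallest ifF; last by apply/negbTE; rewrite -ltNge.
  rewrite size_map size_enum_ord ifF; last by apply/negbTE; rewrite -leNgt.
  rewrite lee_fin -/kk kth_count ?size_map ?size_enum_ord //.
  rewrite (_ : count _ _ = count (fun i => (s (Zc i o) < s (Zt o))%R) (enum (ordinal N))); last exact: count_map.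
  rewrite count_sum_ord.
  rewrite cnt_tup /cnt big_ord_recr /= ltxx addn0 /S ZmaxE.
  by congr (_ < _)%N; apply: eq_bigr => i _; rewrite ZwE.
  by rewrite -enumT size_enum_ord.
have CB : [set o | ((s (Zt o))%:E <= qhat o)%E] = tup S @^-1` Bj ord_max.
  by apply/seteqP; split => o /=; rewrite CBo.
have ct (Y : 'I_N.+1 -> Omega -> R) o j : cnt (@tnth N.+1 R (tup Y o)) j = cnt (fun i => Y i o) j.
  by rewrite /cnt; apply: eq_bigr => i _; rewrite !tnth_mktuple.
have F4 j : P (tup S @^-1` Bj j) = P (tup S @^-1` Bj ord_max).
  have e o : cnt (tnth (tup (fun i => S (tperm j ord_max i)) o)) ord_max = cnt (tnth (tup S o)) j.
    rewrite /cnt [RHS](reindex_inj (@perm_inj _ (tperm j ord_max))).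
    by apply: eq_bigr => i _; rewrite !tnth_mktuple tpermR.
  rewrite (F2 (tperm j ord_max) _ (mBj ord_max)).
  by congr (P _); apply/seteqP; split => o /=; rewrite /Bj /= e.
have mE j : measurable (tup S @^-1` Bj j).
  have := measurable_tup mS measurableT (mBj j). by rewrite setTI.
have F5 : ((kk%:R)%:E <= \sum_(j < N.+1) P (tup S @^-1` Bj j))%E.
  have -> : \sum_(j < N.+1) P (tup S @^-1` Bj j) =
      (\int[P]_(x in setT) (\sum_(j < N.+1) (\1_(tup S @^-1` Bj j) x)%:E))%E.
    rewrite ge0_integral_sum //.
    - by apply: eq_bigr => j _; rewrite integral_indic // setIT.
    - by move=> j; apply/measurable_realfun.measurable_EFinP; exact: measurable_realfun.measurable_indic.
  apply: le_trans (_ : (\int[P]_(x in setT) (cst (kk%:R)%:E) x <= _)%E).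
    rewrite integral_cst // le_eqVlt; apply/orP; left; apply/eqP; rewrite -[X in X = _]mule1; congr (_ * _)%E; apply/esym; exact: probability_setT.
  apply: ge0_le_integral => //.
  - by move=> x _; rewrite lee_fin.
  - by apply: emeasurable_sum => j; apply/measurable_realfun.measurable_EFinP; exact: measurable_realfun.measurable_indic.
  - move=> x _; rewrite sumEFin lee_fin.
    under eq_bigr do rewrite indicE.
    rewrite -natr_sum ler_nat.
    apply: leq_trans (cnt_ge (fun i => S i x) (leqW kkN)) _.
    rewrite leq_eqVlt; apply/orP; left; apply/eqP; apply: eq_bigr => j _.
    have -> : (x \in tup S @^-1` Bj j) = (cnt (tnth (tup S x)) j < kk)%N.
      by apply/idP/idP => [/set_mem //|h]; apply/mem_set.
    congr (nat_of_bool (_ < _)%N); rewrite /cnt; apply: eq_bigr => i _.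
    by rewrite !tnth_mktuple.
set pr := fine (P (tup S @^-1` Bj ord_max)).
have prE : P (tup S @^-1` Bj ord_max) = pr%:E by rewrite fineK // fin_num_measure.
have Hs : ((kk%:R)%:E <= (pr *+ N.+1)%:E)%E.
  move: F5; under eq_bigr do rewrite F4 prE.
  by rewrite sumEFin sumr_const card_ord.
rewrite lee_fin -mulr_natr in Hs.
rewrite CB F3 // prE -EFinM /=.
have -> : c * pr / c = pr by rewrite mulrAC divff ?mul1r // gt_eqF.
rewrite kkE in kx.
have kx' : (1 - alpha) * (N.+1)%:R <= kk%:R := kx.
nra.
Qed.
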